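(* Let $G$ be a torsion abelian group and $\varphi\colon G\to G$ a surjective endomorphism that is positively expansive. Then there exists a finite subgroup $K\leq G$ such that for every finite subgroup $F\leq G$ there exists $m\in\mathbb N$ with $F\subseteq\varphi^mK$.
   Context: $\mathbb N=\{0,1,2,\dots\}$. An endomorphism $\varphi$ of an abelian group $G$ is positively expansive if there is a finite subgroup $S\leq G$ such that for every finite subgroup $F\leq G$ there is $n\in\mathbb N$ with $F\subseteq\sum_{k=0}^n\varphi^kS$. *)

(* Defs.v *)
From mathcomp Require Import all_boot all_algebra.
Set Implicit Arguments. Unset Strict Implicit. Unset Printing Implicit Defensive.
Import GRing.Theory.
Local Open Scope ring_scope.

Definition is_subgroup (G : zmodType) (S : G -> Prop) : Prop :=
  S 0 /\ (forall x y, S x -> S y -> S (x - y)).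

Definition finite_set (G : zmodType) (S : G -> Prop) : Prop :=
  exists s : seq G, forall x, S x <-> x \in s.

Definition finite_subgroup (G : zmodType) (S : G -> Prop) : Prop :=
  is_subgroup S /\ finite_set S.

Definition endo (G : zmodType) (phi : G -> G) : Prop :=
  forall x y, phi (x + y) = phi x + phi y.

Definition torsion (G : zmodType) : Prop :=
  forall x : G, exists n : nat, (0 < n)%N /\ x *+ n = 0.

Definition img_iter (G : zmodType) (phi : G -> G) (k : nat) (S : G -> Prop) : G -> Prop :=
  fun y => exists x, S x /\ y = iter k phi x.

Definition sum_iter (G : zmodType) (phi : G -> G) (n : nat) (S : G -> Prop) : G -> Prop :=
  fun y => exists f : nat -> G, (forall k, (k <= n)%N -> S (f k)) /\
                              y = \sum_(k < n.+1) iter k phi (f k).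

Definition psubset (G : Type) (A B : G -> Prop) : Prop := forall x, A x -> B x.

Definition pos_expansive (G : zmodType) (phi : G -> G) : Prop :=
  exists S : G -> Prop, finite_subgroup S /\
    forall F : G -> Prop, finite_subgroup F ->
      exists n : nat, psubset F (sum_iter phi n S).

(* Main.v *)
Require Import Defs.
From mathcomp Require Import all_boot all_algebra.
Set Implicit Arguments. Unset Strict Implicit.
Import GRing.Theory.
Local Open Scope ring_scope.

Fixpoint gen (G : zmodType) (o : G -> nat) (l : seq G) : seq G :=
  match l with
  | [::] => [:: 0]
  | a :: l' => [seq a *+ i + y | i <- iota 0 (o a), y <- gen o l']
  end.

Lemma modmul (G : zmodType) (a : G) n k : a *+ n = 0 -> a *+ k = a *+ (k %% n).
Proof.
move=> h; rewrite {1}(divn_eq k n) mulrnDr mulnC mulrnA h mul0rn add0r //.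
Qed.

Lemma genC (G : zmodType) (o : G -> nat) (ho : forall a, (0 < o a)%N /\ a *+ o a = 0)
  a l k y : y \in gen o l -> a *+ k + y \in gen o (a :: l).
Proof.
move=> hy /=; have [h1 h2] := ho a.
rewrite (modmul k h2); apply/allpairsP; exists (k %% o a, y)%N => /=; split=> //.
by rewrite mem_iota add0n ltn_pmod.
Qed.

Lemma gen0 (G : zmodType) (o : G -> nat) (ho : forall a, (0 < o a)%N /\ a *+ o a = 0) l :
  0 \in gen o l.
Proof.
elim: l => [|a l IH]; first by rewrite inE.
by rewrite -(addr0 0) -{1}(mulr0n a); exact: genC.
Qed.

Lemma genD (G : zmodType) (o : G -> nat) (ho : forall a, (0 < o a)%N /\ a *+ o a = 0) l x y :
  x \in gen o l -> y \in gen o l -> x + y \in gen o l.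
Proof.
elim: l x y => [|a l IH] x y /=.
  by rewrite !inE => /eqP -> /eqP ->; rewrite addr0.
move=> /allpairsP [[i x'] [_ hx ->]] /allpairsP [[j y'] [_ hy ->]] /=.
rewrite addrACA -mulrnDr; apply: genC => //; exact: IH.
Qed.

Lemma genN (G : zmodType) (o : G -> nat) (ho : forall a, (0 < o a)%N /\ a *+ o a = 0) l x :
  x \in gen o l -> - x \in gen o l.
Proof.
elim: l x => [|a l IH] x /=.
  by rewrite !inE => /eqP ->; rewrite oppr0.
move=> /allpairsP [[i x'] [hi hx ->]] /=.
rewrite mem_iota add0n in hi.
have [_ h2] := ho a.
have e : - (a *+ i) = a *+ (o a - i).
  apply/eqP; rewrite eq_sym -subr_eq0 opprK -mulrnDr subnK ?h2 //; exact: ltnW.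
rewrite opprD e.

have := @genC _ o ho a l (o a - i)%N (-x') (IH _ hx).
exact.
Qed.

Lemma gen_mem (G : zmodType) (o : G -> nat) (ho : forall a, (0 < o a)%N /\ a *+ o a = 0) l a :
  a \in l -> a \in gen o l.
Proof.
elim: l => [|b l IH] //; rewrite inE => /orP [/eqP ->|h].
  by have := @genC _ o ho b l 1 0 (gen0 ho l); rewrite mulr1n addr0.
by have := @genC _ o ho b l 0 a (IH h); rewrite mulr0n add0r.
Qed.

Lemma gen_fsub (G : zmodType) (o : G -> nat) (ho : forall a, (0 < o a)%N /\ a *+ o a = 0) l :
  finite_subgroup (fun x => x \in gen o l).
Proof.
split; last by exists (gen o l).
split; first exact: gen0.
move=> x y hx hy; apply: genD => //; exact: genN.
Qed.

Lemma phi0 (G : zmodType) (phi : G -> G) : endo phi -> phi 0 = 0.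
Proof. by move=> h; have := h 0 0; rewrite addr0 => e; apply: (@addrI _ (phi 0)); rewrite -e addr0. Qed.

Lemma phiN (G : zmodType) (phi : G -> G) : endo phi -> forall x, phi (- x) = - phi x.
Proof. by move=> h x; apply/eqP; rewrite -subr_eq0 opprK -h addNr phi0. Qed.

Lemma phiB (G : zmodType) (phi : G -> G) : endo phi -> forall x y, phi (x - y) = phi x - phi y.
Proof. by move=> h x y; rewrite h phiN. Qed.

Lemma iter_add (G : zmodType) (phi : G -> G) : endo phi -> forall k x y,
  iter k phi (x + y) = iter k phi x + iter k phi y.
Proof. by move=> h; elim=> [|k IH] x y //=; rewrite IH h. Qed.

Lemma sum_rec (G : zmodType) (phi : G -> G) (hphi : endo phi) (f : nat -> G) n :
  \sum_(k < n.+2) iter k phi (f k) = f 0%N + phi (\sum_(k < n.+1) iter k phi (f k.+1)).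
Proof.
rewrite big_ord_recl /= (big_morph phi hphi (phi0 hphi)); congr (_ + _).
Qed.

Lemma T0 (G : zmodType) (phi : G -> G) S y : sum_iter phi 0 S y <-> S y.
Proof.
split.
  by move=> [f [hf ->]]; rewrite big_ord1 /=; apply: hf.
move=> hy; exists (fun _ => y); split=> //; by rewrite big_ord1.
Qed.

Lemma Trec (G : zmodType) (phi : G -> G) (hphi : endo phi) S n y :
  sum_iter phi n.+1 S y <-> exists a b, S a /\ sum_iter phi n S b /\ y = a + phi b.
Proof.
split.
  move=> [f [hf ->]]; exists (f 0%N), (\sum_(k < n.+1) iter k phi (f k.+1)).
  split; first exact: hf.
  split; last exact: sum_rec.
  by exists (fun k => f k.+1); split=> // k hk; apply: hf.
move=> [a [b [ha [[g [hg ->]] ->]]]].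
exists (fun k => if k is k'.+1 then g k' else a); split.
  by case=> [|k] // hk; apply: hg.
by rewrite (sum_rec hphi (fun k => if k is k'.+1 then g k' else a)).
Qed.

Lemma Tsub (G : zmodType) (phi : G -> G) (hphi : endo phi) S :
  is_subgroup S -> forall n, is_subgroup (sum_iter phi n S).
Proof.
move=> [hS0 hSB]; elim=> [|n [IH0 IHB]].
  by split; [apply/T0 | move=> x y /T0 hx /T0 hy; apply/T0; apply: hSB].
split.
  by apply/Trec => //; exists 0, 0; rewrite phi0 // addr0.
move=> x y /(Trec hphi) [a [b [ha [hb ->]]]] /(Trec hphi) [a' [b' [ha' [hb' ->]]]].
apply/Trec => //; exists (a - a'), (b - b'); split; first exact: hSB.
split; first exact: IHB.
by rewrite phiB // opprD addrACA.
Qed.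

Lemma Tfin (G : zmodType) (phi : G -> G) (hphi : endo phi) S :
  finite_set S -> forall n, finite_set (sum_iter phi n S).
Proof.
move=> [s hs]; elim=> [|n [l hl]].
  by exists s => x; split; [move/T0/hs | move/hs/T0].
exists [seq a + phi b | a <- s, b <- l] => x; split.
  move=> /(Trec hphi) [a [b [ha [hb ->]]]]; apply/allpairsP; exists (a, b).
  by split => //; [apply/hs | apply/hl].
move=> /allpairsP [[a b] [ha hb ->]]; apply/Trec => //; exists a, b.
by split; [apply/hs | split; [apply/hl|]].
Qed.

Lemma Tmono (G : zmodType) (phi : G -> G) (hphi : endo phi) S :
  is_subgroup S -> forall n, psubset (sum_iter phi n S) (sum_iter phi n.+1 S).
Proof.
move=> hS; elim=> [|n IH] x.
  move=> /T0 hx; apply/Trec => //; exists x, 0; split=> //; split.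
    by apply/T0; case: hS.
  by rewrite phi0 // addr0.
move=> /(Trec hphi) [a [b [ha [hb ->]]]]; apply/Trec => //; exists a, b.
by split=> //; split=> //; apply: IH.
Qed.

Lemma Tmono' (G : zmodType) (phi : G -> G) (hphi : endo phi) S :
  is_subgroup S -> forall n i, psubset (sum_iter phi n S) (sum_iter phi (n + i) S).
Proof.
move=> hS n; elim=> [|i IH] x; first by rewrite addn0.
by move=> /IH hx; rewrite addnS; apply: Tmono.
Qed.

Lemma sub_add (G : zmodType) (H : G -> Prop) : is_subgroup H -> forall x y, H x -> H y -> H (x + y).
Proof.
move=> [h0 hB] x y hx hy; have := hB x (0 - y) hx (hB 0 y h0 hy); by rewrite sub0r opprK.
Qed.

Theorem lemma4p1 (G : zmodType) (phi : G -> G) :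
  torsion G -> endo phi -> (forall y : G, exists x, phi x = y) ->
  pos_expansive phi ->
  exists K : G -> Prop, finite_subgroup K /\
    forall F : G -> Prop, finite_subgroup F ->
      exists m : nat, psubset F (img_iter phi m K).
Proof.
move=> htor hphi hsurj [S [[hS [s hs]] hexp]].
have [o ho] : exists o : G -> nat, forall a, (0 < o a)%N /\ a *+ o a = 0.
  have ex (a : G) : exists n : nat, (0 < n)%N && (a *+ n == 0).
    by have [n [h1 h2]] := htor a; exists n; rewrite h1 h2 eqxx.
  exists (fun a => xchoose (ex a)) => a.
  by have /andP[h1 /eqP h2] := xchooseP (ex a).
have ex2 (y : G) : exists x, phi x == y by have [x hx] := hsurj y; exists x; rewrite hx.
pose pre y := xchoose (ex2 y).
have hpre (y : G) : phi (pre y) = y by exact/eqP/(xchooseP (ex2 y)).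
pose P := fun x => x \in gen o (map pre s).
have [N hN] := hexp P (gen_fsub ho _).
pose T n := sum_iter phi n S.
have Tsg n : is_subgroup (T n) := Tsub hphi hS n.
have TT : psubset (T N) (fun y => exists k, T N k /\ y = phi k).
  move=> y /(Tmono hphi hS) /(Trec hphi) [a [b [ha [hb ->]]]].
  have hpa : T N (pre a).
    by apply: hN; apply: gen_mem => //; apply: map_f; apply/hs.
  exists (pre a + b); split; first exact: sub_add.
  by rewrite hphi hpre.
have KI m : psubset (T N) (img_iter phi m (T N)).
  elim: m => [|m IH] x hx; first by exists x.
  have [k [hk ->]] := TT x hx.
  have [k' [hk' ->]] := IH k hk.
  by exists k'.
have ST : psubset S (T N).
  move=> x hx; have := Tmono' hphi hS (n:=0) N; rewrite add0n; apply; exact/T0.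
have main j : psubset (T (N + j)%N) (img_iter phi j (T N)).
  elim: j => [|j IH] y; first by rewrite addn0 => hy; exists y.
  rewrite addnS => /(Trec hphi) [a [b [ha [hb ->]]]].
  have [k1 [hk1 ->]] := KI j.+1 a (ST a ha).
  have [k [hk ->]] := IH b hb.
  exists (k1 + k); split; first exact: sub_add.
  by rewrite iter_add.
exists (T N); split.
  by split; [exact: Tsg | exact: (Tfin hphi (ex_intro _ s hs) N)].
move=> F hF; have [n hn] := hexp F hF; exists n => x /hn hx; apply: main.
rewrite addnC; exact: (Tmono' hphi hS (n:=n) N hx).
Qed.
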